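(* Let $A$ be a VPA with $\emptyset\subsetneq\mathcal L(A)\subsetneq\Sigma^*$ and assume $S_0$ is bounded. For each $\tau\in Q^Q$ let $R_\tau$ be a bounded overapproximation of $\tau^{-1}S_1$, and let $\mathrm{RegFlat}=R_0(\Sigma_c\cup R_1)^*$ where $R_1=\bigcup_{\tau\in Q^Q}\tau R_\tau$ and $R_0=\bigcup_{\tau\in Q^Q}\mathsf{Suf}(R_\tau)$. If $\mathrm{RegFlat}$ contains a linear fooling set for $\nu_f$, then $\mathrm{Flat}$ also contains a linear fooling set for $\nu_f$.
   Context: VPA $A=(Q,\Sigma,\Gamma,\bot,q_0,\delta,F)$ over a pushdown alphabet $\Sigma=\Sigma_c\cup\Sigma_r\cup\Sigma_{\mathit{int}}$ ($\Sigma_c,\Sigma_r\ne\emptyset$), with configurations $\alpha q$ ($\alpha\in\bot(\Gamma\setminus\{\bot\})^*$), call letters pushing via $\delta_c:Q\times\Sigma_c\to(\Gamma\setminus\{\bot\})\times Q$, internal letters via $\delta_{\mathit{int}}:Q\times\Sigma_{\mathit{int}}\to Q$, return letters popping the top $\gamma\ne\bot$ via $\delta_r:Q\times\Sigma_r\times\Gamma\to Q$ (or reading $\bot$ without popping). $\delta(c,w)$ is the configuration reached; $\mathcal L(c)$ the words leading from $c$ to a state in $F$. $W$: well-matched words (smallest set containing $\varepsilon$, $\Sigma_{\mathit{int}}$, closed under concatenation and $w\mapsto awb$, $a\in\Sigma_c$, $b\in\Sigma_r$); $D$: descending words (products of well-matched words and return letters); $\varphi:W\to Q^Q$ with $\delta(\alpha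 p,w)=\alpha\varphi(w)(p)$. $\mathrm{rConf}$: configurations reachable from $\bot q_0$; $\mathsf{rep}(c)$: length-lexicographically least (for fixed linear orders on $\Gamma,Q$) $c'\in\mathrm{rConf}$ with $\mathcal L(c')=\mathcal L(c)$; $\nu_A(w)=\mathsf{rep}(\delta(\bot q_0,w))$. For $w=a_1\cdots a_n\in D$, $\nu_A(a_i\cdots a_n)=\bot q_i$; $\sigma_0(w)=q_1\cdots q_n$; for nonempty $w\in W$, $\sigma_1(w)=\varphi(w)q_2\cdots q_n$. $S_0=\sigma_0(D)$, $S_1=\sigma_1(W\setminus\{\varepsilon\})$. $\Sigma_f=\Sigma_c\cup Q\cup Q^Q$ (disjoint); $\mathrm{AllFlat}=Q^*(\Sigma_c\cup Q^QQ^* )^*$ with unique factorization $s_0s_1\cdots s_m$, $s_0\in Q^*$, $s_i\in\Sigma_c\cup Q^QQ^*$. $t_f$: $t_f(\varepsilon)=\bot q_0$, $t_f(q_1\cdots q_n)=\bot q_1$ ($n\ge1$), $t_f(s_0\cdots s_m)=\delta(t_f(s_0\cdots s_{m-1}),s_m)$ if $s_m\in\Sigma_c$, and $=\alpha\tau(q)$ if $s_m=\tau q_2\cdots q_k$ and $t_f(s_0\cdots s_{m-1})=\alpha q$. $\nu_f=\mathsf{rep}\circ t_f$ with domain $\mathrm{AllFlat}$. $\mathrm{Flat}=S_0(\Sigma_c\cup S_1)^*$. Bounded language: subset of $w_1^*\cdots w_k^*$. $\tau^{-1}S_1=\{x:\tau x\in S_1\}$. $\Psi(a_1\cdots a_n)=\{(a_i,n-i+1)\}$,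 $\Psi(K)=\bigcup_{w\in K}\Psi(w)$. A bounded overapproximation of a bounded context-free $K$ is a bounded regular $R\supseteq K$ with $\{|w|:w\in K\}=\{|w|:w\in R\}$ and $\Psi(K)=\Psi(R)$. $\mathsf{Suf}(L)$: all suffixes of words of $L$. A linear fooling scheme for a partial function $t$ on $\Sigma_f^*$ is $(u_2,v_2,u,v,Z)$ with $u_2$ a suffix of $u$, $v_2$ a suffix of $v$, $|u_2|=|v_2|$, $\{u_2,v_2\}\{u,v\}^*Z\subseteq\mathrm{dom}(t)$, and for each $n$ some $z_n\in Z$ with $|z_n|\in O(n)$ and $t(u_2wz_n)\ne t(v_2wz_n)$ for all $w\in\{u,v\}^{\le n}$; the set $\{u_2,v_2\}\{u,v\}^*Z$ is a linear fooling set, and a language contains one if such a set is a subset of it. *)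

(* Defs.v *)
From mathcomp Require Import all_boot.
Set Implicit Arguments. Unset Strict Implicit. Unset Printing Implicit Defensive.

Inductive letter (Ac Ar Ai : Type) := Call of Ac | Ret of Ar | Int of Ai.
Arguments Call {Ac Ar Ai} _.
Arguments Ret {Ac Ar Ai} _.
Arguments Int {Ac Ar Ai} _.

(* A deterministic VPA.  [G] is Gamma \ {bot}; the bottom symbol bot is
   represented by [None] in [option G].  A configuration  alpha q  with
   alpha = bot g1 ... gk  is represented by ([:: g1; ...; gk], q)
   (bottom first, top last). *)
Record vpa (Ac Ar Ai Q G : finType) := Vpa {
  q0 : Q;
  dc : Q -> Ac -> G * Q;
  di : Q -> Ai -> Q;
  dr : Q -> Ar -> option G -> Q;        (* delta_r ; None = bot (no pop) *)
  fin : pred Q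
}.

Fixpoint lexle (s t : seq nat) : bool :=
  match s, t with
  | [::], _ => true
  | _ :: _, [::] => false
  | x :: s', y :: t' => (x < y) || ((x == y) && lexle s' t')
  end.

Definition bounded (T : Type) (L : seq T -> Prop) : Prop :=
  exists ws : seq (seq T), forall x, L x ->
    exists ns : seq nat, size ns = size ws /\
      x = flatten (map (fun p : nat * seq T => flatten (nseq p.1 p.2)) (zip ns ws)).

Definition regular (T : finType) (L : seq T -> Prop) : Prop :=
  exists (S : finType) (s0 : S) (d : S -> T -> S) (F : pred S),
    forall x, L x <-> F (foldl d s0 x).

(* p \in Psi(x), with Psi(a_1...a_n) = {(a_i, n-i+1)} *)
Fixpoint inPsi (T : Type) (p : T * nat) (x : seq T) : Prop :=
  match x with
  | [::] => False
  | a :: x' => p = (a, (size x').+1) \/ inPsi p x'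
  end.

Definition bounded_overapprox (T : finType) (K R : seq T -> Prop) : Prop :=
  [/\ bounded R, regular R, (forall x, K x -> R x),
      (forall n, (exists x, K x /\ size x = n) <-> (exists x, R x /\ size x = n))
    & (forall p, (exists x, K x /\ inPsi p x) <-> (exists x, R x /\ inPsi p x))].

Definition Suf (T : Type) (L : seq T -> Prop) : seq T -> Prop :=
  fun x => exists y, L (y ++ x).

Definition blocks (T : Type) (u v : seq T) (bs : seq bool) : seq T :=
  flatten (map (fun b : bool => if b then u else v) bs).

Definition fool_set (T : Type) (u2 v2 u v : seq T) (Z : seq T -> Prop) : seq T -> Prop :=
  fun x => exists y bs z, (y = u2 \/ y = v2) /\ Z z /\ x = y ++ blocks u v bs ++ z.

(* Linear fooling scheme (u2,v2,u,v,Z) for a partial function t, given by its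
   graph [t : seq T -> C -> Prop] (t x c  <->  x \in dom t /\ t(x) = c). *)
Definition lin_fooling_scheme (T C : Type) (t : seq T -> C -> Prop)
    (u2 v2 u v : seq T) (Z : seq T -> Prop) : Prop :=
  [/\ (exists p, u = p ++ u2), (exists p, v = p ++ v2), size u2 = size v2,
      (forall x, fool_set u2 v2 u v Z x -> exists c, t x c)
    & exists zs : nat -> seq T,
        [/\ (forall n, Z (zs n)),
            (exists K N, forall n, N <= n -> size (zs n) <= K * n)
          & forall n bs, size bs <= n ->
              exists c1 c2, [/\ t (u2 ++ blocks u v bs ++ zs n) c1,
                                t (v2 ++ blocks u v bs ++ zs n) c2 & c1 <> c2]]].

Definition contains_lfs (T C : Type) (L : seq T -> Prop) (t : seq T -> C -> Prop) : Prop :=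
  exists u2 v2 u v Z, lin_fooling_scheme t u2 v2 u v Z /\
    (forall x, fool_set u2 v2 u v Z x -> L x).

Definition flat (Ac Q : finType) : finType := (Ac + (Q + {ffun Q -> Q}))%type.
Definition FC (Ac Q : finType) (a : Ac) : flat Ac Q := inl a.
Definition FQ (Ac Q : finType) (q : Q) : flat Ac Q := inr (inl q).
Definition FT (Ac Q : finType) (t : {ffun Q -> Q}) : flat Ac Q := inr (inr t).
Arguments FC {Ac Q} a.
Arguments FQ {Ac Q} q.
Arguments FT {Ac Q} t.

Inductive fseg (Ac Q : finType) := SCall of Ac | STau of {ffun Q -> Q} & seq Q.
Arguments SCall {Ac Q} _.
Arguments STau {Ac Q} _ _.
Definition segw (Ac Q : finType) (s : fseg Ac Q) : seq (flat Ac Q) :=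
  match s with SCall a => [:: FC a] | STau t qs => FT t :: map FQ qs end.

Definition R1 (Ac Q : finType) (R : {ffun Q -> Q} -> seq (flat Ac Q) -> Prop) :
  seq (flat Ac Q) -> Prop := fun x => exists t y, R t y /\ x = FT t :: y.
Definition R0 (Ac Q : finType) (R : {ffun Q -> Q} -> seq (flat Ac Q) -> Prop) :
  seq (flat Ac Q) -> Prop := fun x => exists t, Suf (R t) x.
Definition RegFlat (Ac Q : finType) (R : {ffun Q -> Q} -> seq (flat Ac Q) -> Prop) :
  seq (flat Ac Q) -> Prop :=
  fun x => exists x0 ys, [/\ R0 R x0,
             (forall y, y \in ys -> (exists a, y = [:: FC a]) \/ R1 R y)
           & x = x0 ++ flatten ys].

Section VPAdefs.
Variables (Ac Ar Ai Q G : finType) (A : vpa Ac Ar Ai Q G).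
Local Notation letter := (letter Ac Ar Ai).
Local Notation conf := (seq G * Q)%type.

Definition step (c : conf) (x : letter) : conf :=
  let: (s, q) := c in
  match x with
  | Call a => let: (g, q') := dc A q a in (rcons s g, q')
  | Int i => (s, di A q i)
  | Ret b => match rev s with
             | [::] => (s, dr A q b None)
             | g :: r => (rev r, dr A q b (Some g))
             end
  end.

Definition run (c : conf) (w : seq letter) : conf := foldl step c w.
Definition init : conf := ([::], q0 A).
Definition acc (c : conf) (w : seq letter) : bool := fin A (run c w).2.
Definition same_lang (c c' : conf) : Prop := forall w, acc c w = acc c' w.
Definition rConf (c : conf) : Prop := exists w, run init w = c.

Inductive wm : seq letter -> Prop :=
| wm_nil : wm [::]
| wm_int i : wm [:: Int i]
| wm_cat u v : wm u -> wm v -> wm (u ++ v)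
| wm_nest a u b : wm u -> wm (Call a :: rcons u (Ret b)).

Inductive desc : seq letter -> Prop :=
| desc_nil : desc [::]
| desc_wm u v : wm u -> desc v -> desc (u ++ v)
| desc_ret b v : desc v -> desc (Ret b :: v).

(* phi(w) for w well-matched: delta(alpha p, w) = alpha phi(w)(p) *)
Definition phi (w : seq letter) : {ffun Q -> Q} := [ffun p => (run ([::], p) w).2].

(* fixed linear orders on Gamma and Q, given by injective ranks *)
Variables (rG : G -> nat) (rQ : Q -> nat).
Definition conf_code (c : conf) : seq nat := rcons (map rG c.1) (rQ c.2).
Definition conf_le (c c' : conf) : bool :=
  (size c.1 < size c'.1) ||
  ((size c.1 == size c'.1) && lexle (conf_code c) (conf_code c')).

(* rep(c) = c'  (graph of the partial function rep) *)
Definition is_rep (c c' : conf) : Prop :=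
  [/\ rConf c', same_lang c' c &
      forall c'', rConf c'' -> same_lang c'' c -> conf_le c' c''].

Definition nuA (w : seq letter) (c' : conf) : Prop := is_rep (run init w) c'.

Definition sigma0 (w : seq letter) (qs : seq Q) : Prop :=
  size qs = size w /\
  forall i, i < size w -> nuA (drop i w) ([::], nth (q0 A) qs i).

Definition S0 : seq Q -> Prop := fun x => exists w, desc w /\ sigma0 w x.

Definition S1 : seq (flat Ac Q) -> Prop :=
  fun x => exists w qs, [/\ wm w, w <> [::], sigma0 w qs &
                            x = FT (phi w) :: map FQ (behead qs)].

Definition tauinvS1 (t : {ffun Q -> Q}) : seq (flat Ac Q) -> Prop :=
  fun x => S1 (FT t :: x).

Definition Flat : seq (flat Ac Q) -> Prop :=
  fun x => exists x0 ys, [/\ S0 x0,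
             (forall y, y \in ys -> (exists a, y = [:: FC a]) \/ S1 y)
           & x = map FQ x0 ++ flatten ys].

Definition tf_seg (c : conf) (s : fseg Ac Q) : conf :=
  match s with
  | SCall a => step c (Call a)
  | STau t _ => (c.1, t c.2)
  end.
Definition tf (qs : seq Q) (ss : seq (fseg Ac Q)) : conf :=
  foldl tf_seg (if qs is q1 :: _ then ([::], q1) else init) ss.

(* graph of nu_f = rep o t_f, with domain (contained in) AllFlat *)
Definition nu_f (x : seq (flat Ac Q)) (c : conf) : Prop :=
  exists qs ss, x = map FQ qs ++ flatten (map (@segw Ac Q) ss) /\ is_rep (tf qs ss) c.

End VPAdefs.

(* Main.v *)
Require Import Defs.
From mathcomp Require Import all_boot.
From Stdlib Require Import ClassicalEpsilon.
From mathcomp Require Import zify.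
Set Implicit Arguments. Unset Strict Implicit. Unset Printing Implicit Defensive.

Section Bounded.
Variable T : Type.

Definition powf (p : nat * seq T) := flatten (nseq p.1 p.2).
Definition BW (ws : seq (seq T)) (x : seq T) :=
  exists ns : seq nat, size ns = size ws /\ x = flatten (map powf (zip ns ws)).

Lemma BW_nil ws : BW ws [::].
Proof. by exists (nseq (size ws) 0); rewrite size_nseq; split=> //; elim: ws. Qed.

Lemma BW_cat ws1 ws2 x y : BW ws1 x -> BW ws2 y -> BW (ws1 ++ ws2) (x ++ y).
Proof.
case=> n1 [h1 ->] [n2 [h2 ->]]; exists (n1 ++ n2); split; first by rewrite !size_cat h1 h2.
by rewrite zip_cat // map_cat flatten_cat.
Qed.

Lemma BW_l ws1 ws2 x : BW ws1 x -> BW (ws1 ++ ws2) x.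
Proof. by move=> h; rewrite -(cats0 x); apply: BW_cat => //; exact: BW_nil. Qed.

Lemma BW_r ws1 ws2 x : BW ws2 x -> BW (ws1 ++ ws2) x.
Proof. by move=> h; rewrite -(cat0s x); apply: BW_cat => //; exact: BW_nil. Qed.

Lemma BW_pow (w : seq T) n : BW [:: w] (flatten (nseq n w)).
Proof. by exists [:: n]; rewrite /= cats0. Qed.

Lemma BW_word (w : seq T) : BW [:: w] w.
Proof. by have := BW_pow w 1; rewrite /= cats0. Qed.

Lemma BW_map_mem (f : nat -> seq T) (l : seq nat) i : i \in l -> BW (map f l) (f i).
Proof.
case/splitPr=> l1 l2; rewrite map_cat /=; apply: BW_r; rewrite -cat1s; apply: BW_l; exact: BW_word.
Qed.

Lemma cat_split (p f P S : seq T) : p ++ f = P ++ S ->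
  (size p <= size P -> exists P', P = p ++ P' /\ f = P' ++ S) /\
  (size P < size p -> exists p2, p = P ++ p2 /\ S = p2 ++ f).
Proof.
elim: p P => [|x p IH] [|y P] /=.
- by move=> ->; split=> // _; exists [::].
- by move=> ->; split=> // _; exists (y :: P).
- by move=> <-; split=> // _; exists (x :: p).
- case=> -> /IH [h1 h2]; split; rewrite ltnS => hs.
    by have [P' [-> ->]] := h1 hs; exists P'.
  by have [p2 [-> ->]] := h2 hs; exists p2.
Qed.

Lemma pow_prefix (w x z : seq T) n : x ++ z = flatten (nseq n w) ->
  exists e i, i <= size w /\ x = flatten (nseq e w) ++ take i w.
Proof.
elim: n x z => [|n IH] x z /=.
  case: x => [_|a x]; first by exists 0, 0; rewrite take0.
  by case: z.
move=> e; have [h1 h2] := cat_split e.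
case: (leqP (size x) (size w)) => hs.
  have [P' [-> _]] := h1 hs; exists 0, (size x); rewrite size_cat leq_addr; split=> //.
  by rewrite take_size_cat.
have [p2 [-> e2]] := h2 hs; have [k [i [hi ->]]] := IH _ _ (esym e2).
by exists k.+1, i; rewrite catA.
Qed.

Lemma pow_suffix (w s z : seq T) n : z ++ s = flatten (nseq n w) ->
  exists e i, i <= size w /\ s = drop i w ++ flatten (nseq e w).
Proof.
elim: n s z => [|n IH] s z /=.
  case: s z => [|a s] [|b z] //= _; by exists 0, (size w); rewrite drop_size.
move=> e; have [h1 h2] := cat_split e.
case: (leqP (size z) (size w)) => hs.
  have [P' [-> ->]] := h1 hs; exists n, (size z); rewrite size_cat leq_addr; split=> //.
  by rewrite drop_size_cat.
have [p2 [_ e2]] := h2 hs; exact: IH _ _ (esym e2).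
Qed.

Definition prefs (w : seq T) := [seq take i w | i <- iota 0 (size w).+1].
Definition sufs (w : seq T) := [seq drop i w | i <- iota 0 (size w).+1].

Lemma BW_pref ws : exists ws', forall x y, BW ws (x ++ y) -> BW ws' x.
Proof.
elim: ws => [|w ws0 [ws0' IH]].
  exists [::] => x y [ns [hs e]]; move: e; have -> : ns = [::] by case: ns hs.
  by case: x => [|a x] //= _; exact: BW_nil.
exists ((w :: prefs w) ++ (w :: ws0')) => x y [[|n ns] [//= [hn] e]].
have [h1 h2] := cat_split e.
case: (leqP (size x) (size (flatten (nseq n w)))) => hs.
  have [P' [eP _]] := h1 hs.
  have [k [i [hi ->]]] := pow_prefix (esym eP).
  apply: (@BW_l (w :: prefs w) (w :: ws0')); rewrite -cat1s; apply: BW_cat; first exact: BW_pow.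
  by apply: BW_map_mem; rewrite mem_iota.
have [p2 [-> e2]] := h2 hs.
apply: (@BW_r (w :: prefs w) (w :: ws0')); rewrite -cat1s; apply: BW_cat; first exact: BW_pow.
by apply: (IH p2 y); exists ns; split.
Qed.

Lemma BW_suf ws : exists ws', forall x y, BW ws (x ++ y) -> BW ws' y.
Proof.
elim: ws => [|w ws0 [ws0' IH]].
  exists [::] => x y [ns [hs e]]; move: e; have -> : ns = [::] by case: ns hs.
  by case: x => [|a x] //=; case: y => [|b y] //= _; exact: BW_nil.
exists ((sufs w ++ w :: ws0) ++ ws0') => x y [[|n ns] [//= [hn] e]].
have [h1 h2] := cat_split e.
case: (leqP (size x) (size (flatten (nseq n w)))) => hs.
  have [P' [eP ->]] := h1 hs.
  have [k [i [hi ->]]] := pow_suffix (esym eP).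
  apply: (@BW_l (sufs w ++ w :: ws0) ws0'); rewrite -catA; apply: BW_cat; first by apply: BW_map_mem; rewrite mem_iota.
  rewrite -cat1s; apply: BW_cat; first exact: BW_pow.
  by exists ns; split.
have [p2 [_ e2]] := h2 hs.
by apply: (@BW_r (sufs w ++ w :: ws0) ws0'); apply: (IH p2 y); exists ns; split.
Qed.

Lemma BW_fac ws : exists ws', forall a x b, BW ws (a ++ x ++ b) -> BW ws' x.
Proof.
have [ws1 h1] := BW_suf ws; have [ws2 h2] := BW_pref ws1.
by exists ws2 => a x b /h1 /h2.
Qed.

Lemma BW_union (I : eqType) (L : I -> seq T -> Prop) (l : seq I) :
  (forall i, exists ws, forall x, L i x -> BW ws x) ->
  exists ws, forall i, i \in l -> forall x, L i x -> BW ws x.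
Proof.
move=> h; elim: l => [|i l [ws IH]]; first by exists [::].
have [wi hi] := h i; exists (wi ++ ws) => j; rewrite in_cons => /orP[/eqP-> x /hi|/IH hj x /hj].
  exact: BW_l.
exact: BW_r.
Qed.

End Bounded.

Fixpoint vecs (N k : nat) : seq (seq nat) :=
  if k is k'.+1 then [seq i :: v | i <- iota 0 N.+1, v <- vecs N k'] else [:: [::]].

Lemma size_vecs N k : size (vecs N k) = N.+1 ^ k.
Proof.
elim: k => [//|k IH].
change (size [seq i :: v | i <- iota 0 N.+1, v <- vecs N k] = N.+1 ^ k.+1).
by rewrite size_allpairs size_iota IH expnS.
Qed.

Lemma mem_vecs N k v : size v = k -> all (fun i => i <= N) v -> v \in vecs N k.
Proof.
elim: k v => [|k IH] [|i v] // [hs] /andP[hi hv].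
change (i :: v \in [seq i :: v | i <- iota 0 N.+1, v <- vecs N k]).
by apply: (allpairs_f (fun i v => i :: v)); [rewrite mem_iota | exact: IH].
Qed.

Lemma size_powf (T : Type) (p : nat * seq T) : size (powf p) = p.1 * size p.2.
Proof. by case: p => n w; rewrite /powf /=; elim: n => //= n IH; rewrite size_cat IH mulSn. Qed.

Definition normv (T : Type) (ns : seq nat) (ws : seq (seq T)) :=
  map (fun p : nat * seq T => if nilp p.2 then 0 else p.1) (zip ns ws).

Lemma normvP (T : Type) (ns : seq nat) (ws : seq (seq T)) : size ns = size ws ->
  [/\ size (normv ns ws) = size ws,
      flatten (map (@powf T) (zip (normv ns ws) ws)) = flatten (map (@powf T) (zip ns ws))
    & all (fun i => i <= size (flatten (map (@powf T) (zip ns ws)))) (normv ns ws)].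
Proof.
elim: ws ns => [|w ws IH] [|n ns] //= [hs].
have [h1 h2 h3] := IH _ hs; split.
- by rewrite h1.
- rewrite h2; congr (_ ++ _); case: w {h3} => [|a w] //=.
  by rewrite /powf /=; elim: n.
- apply/andP; split.
    rewrite size_cat; case: w {h1 h2 h3} => [|a w] /=; first by [].
    rewrite size_powf /= mulnS; lia.
  apply: sub_all h3 => i /leq_trans; apply; rewrite size_cat; exact: leq_addl.
Qed.

Lemma BW_count (T : eqType) (ws : seq (seq T)) N M (G : M.-tuple bool -> seq T) :
  injective G -> (forall b, BW ws (G b) /\ size (G b) = N) -> 2 ^ M <= N.+1 ^ size ws.
Proof.
move=> iG hG.
set Fv := fun v : seq nat => flatten (map (@powf T) (zip v ws)).
have sub : {subset map G (enum {: M.-tuple bool}) <= map Fv (vecs N (size ws))}.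
  move=> x /mapP [b _ ->]; have [[ns [hs e]] hN] := hG b.
  have [k1 k2 k3] := normvP hs.
  apply/mapP; exists (normv ns ws); last by rewrite /Fv k2 e.
  by apply: mem_vecs => //; rewrite -hN e.
have hu : uniq (map G (enum {: M.-tuple bool})) by rewrite map_inj_uniq // enum_uniq.
have := uniq_leq_size hu sub.
by rewrite !size_map size_vecs -enumT -cardT card_tuple card_bool.
Qed.

Lemma leq_expk m n k : m <= n -> m ^ k <= n ^ k.
Proof. by move=> h; elim: k => // k IH; rewrite !expnS leq_mul. Qed.

Lemma exp_beats_poly a b k : exists M, (a + b * M).+1 ^ k < 2 ^ M.
Proof.
set c := a + b + 1.
set s := c * k + 2 * k + 1.
have hs : s < 2 ^ s by apply: ltn_expl.
exists (2 ^ (2 * s)).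
have hM : 0 < 2 ^ (2 * s) by rewrite expn_gt0.
have h1 : (a + b * 2 ^ (2 * s)).+1 <= c * 2 ^ (2 * s).
  rewrite /c; nia.
have hc : c < 2 ^ c by apply: ltn_expl.
apply: (leq_ltn_trans (leq_expk k h1)).
apply: (leq_ltn_trans (n := (2 ^ c * 2 ^ (2 * s)) ^ k)).
  by apply: leq_expk; rewrite leq_mul2r (ltnW hc) orbT.
rewrite -expnD -expnM ltn_exp2l //.
have e2 : 2 ^ (2 * s) = 2 ^ s * 2 ^ s by rewrite mul2n -addnn expnD.
rewrite e2; rewrite /s in hs *; nia.
Qed.

Section Part1.
Variables (Ac Ar Ai Q G : finType) (A : vpa Ac Ar Ai Q G) (rG : G -> nat) (rQ : Q -> nat).
Local Notation F := (flat Ac Q).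
Local Notation conf := (seq G * Q)%type.

Definition isQ (x : F) : bool := if x is inr (inl _) then true else false.
Definition nonQs (x : seq F) := filter (predC isQ) x.
Definition hd1 (x : seq F) : option Q :=
  match x with (inr (inl q)) :: _ => Some q | _ => None end.
Definition SE (a b : seq F) := [/\ nonQs a = nonQs b, hd1 a = hd1 b & nilp a = nilp b].

Lemma nonQs_cat a b : nonQs (a ++ b) = nonQs a ++ nonQs b.
Proof. exact: filter_cat. Qed.

Lemma SE_refl a : SE a a. Proof. by []. Qed.
Lemma SE_sym a b : SE a b -> SE b a. Proof. by case=> *; split. Qed.
Lemma SE_cat a a' b b' : SE a a' -> SE b b' -> SE (a ++ b) (a' ++ b').
Proof.
case=> h1 h2 h3 [k1 k2 k3]; split; first by rewrite !nonQs_cat h1 k1.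
- case: a a' h2 h3 {h1} => [|x a] [|y a'] //= h2 _.
- by rewrite /nilp !size_cat !addn_eq0 -!/(nilp _) h3 k3.
Qed.

Definition tfl (c : conf) (x : F) : conf :=
  match x with inl a => step A c (Call a) | inr (inl _) => c | inr (inr t) => (c.1, t c.2) end.
Definition TF (h : option Q) (ns : seq F) : conf :=
  foldl tfl (if h is Some q then ([::], q) else init A) ns.

Definition AllFlat (x : seq F) := exists qs ss, x = map FQ qs ++ flatten (map (@segw Ac Q) ss).

Lemma nonQs_segs (ss : seq (fseg Ac Q)) :
  nonQs (flatten (map (@segw Ac Q) ss)) =
  map (fun s => match s with SCall a => FC a | STau t _ => FT t end) ss.
Proof.
elim: ss => //= s ss IH; rewrite nonQs_cat IH.
case: s => [a|t qs] //=.
by rewrite /nonQs /=; elim: qs.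
Qed.

Lemma nonQs_mapFQ (qs : seq Q) : nonQs (map FQ qs) = [::].
Proof. by elim: qs. Qed.

Lemma tf_TF qs ss : tf A qs ss =
  TF (hd1 (map FQ qs ++ flatten (map (@segw Ac Q) ss)))
     (nonQs (map FQ qs ++ flatten (map (@segw Ac Q) ss))).
Proof.
rewrite /TF nonQs_cat nonQs_mapFQ nonQs_segs /=.
have -> : (if hd1 (map FQ qs ++ flatten (map (@segw Ac Q) ss)) is Some q then ([::], q) else init A)
   = (if qs is q1 :: _ then ([::], q1) else init A).
  by case: qs => [|q qs] //=; case: ss => [|[a|t l] ss].
rewrite /tf; elim: ss (if qs is q1 :: _ then _ else _) => //= s ss IH c.
by rewrite IH; case: s.
Qed.

Lemma nu_fE x c : nu_f A rG rQ x c <-> AllFlat x /\ is_rep A rG rQ (TF (hd1 x) (nonQs x)) c.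
Proof.
split.
- by case=> qs [ss [-> h]]; split; [exists qs, ss | rewrite -tf_TF].
- by case=> [[qs [ss ->]] h]; exists qs, ss; rewrite tf_TF.
Qed.

Lemma nu_f_transfer x x' c : nu_f A rG rQ x c -> AllFlat x' -> SE x x' -> nu_f A rG rQ x' c.
Proof. by move/nu_fE=> [_ h] hx [e1 e2 _]; apply/nu_fE; rewrite -e1 -e2. Qed.

Lemma lexle_antisym s t : size s = size t -> lexle s t -> lexle t s -> s = t.
Proof.
elim: s t => [|x s IH] [|y t] //= [hs] /orP h1 /orP h2.
case: h1 => [lt1|/andP[/eqP e1 l1]].
  case: h2 => [lt2|/andP[/eqP e2 _]]; first by move: (ltn_trans lt1 lt2); rewrite ltnn.
  by rewrite e2 ltnn in lt1.
subst y; case: h2 => [|/andP[_ l2]]; first by rewrite ltnn.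
by rewrite (IH t hs l1 l2).
Qed.

Lemma is_rep_fun c c1 c2 : injective rG -> injective rQ ->
  is_rep A rG rQ c c1 -> is_rep A rG rQ c c2 -> c1 = c2.
Proof.
move=> iG iQ [r1 s1 m1] [r2 s2 m2].
have le12 := m1 _ r2 s2; have le21 := m2 _ r1 s1.
move: le12 le21; rewrite /conf_le.
case: (ltngtP (size c1.1) (size c2.1)) => //= hs l1 l2.
have := lexle_antisym _ l1 l2; rewrite /conf_code !size_rcons !size_map hs => /(_ erefl).
move/rcons_inj=> [/(inj_map iG) e1 /iQ e2].
by case: c1 c2 e1 e2 {r1 s1 m1 r2 s2 m2 hs l1 l2} => ? ? [? ?] /= -> ->.
Qed.

Lemma nu_f_fun x c1 c2 : injective rG -> injective rQ ->
  nu_f A rG rQ x c1 -> nu_f A rG rQ x c2 -> c1 = c2.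
Proof. by move=> iG iQ /nu_fE[_ h1] /nu_fE[_ h2]; exact: is_rep_fun h1 h2. Qed.


Lemma desc_cat (d1 d2 : seq (letter Ac Ar Ai)) : desc d1 -> desc d2 -> desc (d1 ++ d2).
Proof.
move=> h1 h2; elim: h1 => [//|u v hu hv IH|b v hv IH]; first by rewrite -catA; apply: desc_wm.
by rewrite cat_cons; apply: desc_ret.
Qed.

Lemma wm_desc (u : seq (letter Ac Ar Ai)) : wm u -> desc u.
Proof. by move=> hu; rewrite -(cats0 u); apply: desc_wm => //; exact: desc_nil. Qed.

Lemma desc_drop_wm (w : seq (letter Ac Ar Ai)) : wm w -> forall j, desc (drop j w).
Proof.
elim=> [|i|u v hu IHu hv IHv|a u b hu IHu] j.
- exact: desc_nil.
- by case: j => [|j] /=; [apply: wm_desc; exact: wm_int | exact: desc_nil].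
- rewrite drop_cat; case: ifP => _; last exact: IHv.
  by apply: desc_cat; [exact: IHu | exact: wm_desc].
- case: j => [|j]; first by apply: wm_desc; exact: wm_nest.
  rewrite /= -cats1 drop_cat; case: ifP => _.
    by apply: desc_cat; [exact: IHu | apply: desc_ret; exact: desc_nil].
  case: (j - size u) => [|k] /=; first by apply: desc_ret; exact: desc_nil.
  by rewrite /=; case: k => [|k]; exact: desc_nil.
Qed.

Lemma S0_nil : S0 A rG rQ [::].
Proof. by exists [::]; split; [exact: desc_nil | split]. Qed.

Lemma inPsiP (p : F * nat) x : inPsi p x <-> exists x1 x2, x = x1 ++ p.1 :: x2 /\ p.2 = (size x2).+1.
Proof.
case: p => b k /=.
elim: x => [|a x IH] /=; first by split=> // [[[|? ?] [? []]]].
split.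
- case=> [[-> ->]|/IH [x1 [x2 [-> e]]]]; first by exists [::], x.
  by exists (a :: x1), x2.
- case=> [[|c x1] [x2 [/= [ea ex] ek]]]; first by left; rewrite ea ek ex.
  right; apply/IH; exists x1, x2; by rewrite ex.
Qed.

Definition K t := tauinvS1 A rG rQ t.

Lemma KP t y : K t y -> exists w qs, [/\ wm w, w <> [::], sigma0 A rG rQ w qs,
   t = phi A w & y = map FQ (behead qs)].
Proof. by case=> w [qs [hw hne hs [e1 e2]]]; exists w, qs; split. Qed.

Lemma K_allQ t y : K t y -> all isQ y.
Proof. by case/KP=> w [qs [_ _ _ _ ->]]; elim: (behead qs). Qed.

Lemma R_allQ (R : {ffun Q -> Q} -> seq F -> Prop) t r :
  bounded_overapprox (K t) (R t) -> R t r -> all isQ r.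
Proof.
case=> _ _ _ _ hP hr; apply/allP=> a ha.
have [r1 [r2 er]] : exists r1 r2, r = r1 ++ a :: r2.
  by case/splitPr: ha => r1 r2; exists r1, r2.
have : exists x, R t x /\ inPsi (a, (size r2).+1) x.
  exists r; split => //; apply (proj2 (inPsiP (a, (size r2).+1) r)); by exists r1, r2.
move/hP=> [y [hy hy2]]; move: (proj1 (inPsiP _ _) hy2) => [y1 [y2 [ey _]]].
by move: (K_allQ hy); rewrite ey all_cat /= => /and3P[].
Qed.

Lemma S0_suffix t y1 s : K t (y1 ++ s) -> exists s0, s = map FQ s0 /\ S0 A rG rQ s0.
Proof.
case/KP=> w [qs [hw _ [hsz hn] _ e]].
exists (drop (size y1).+1 qs); split.
  have -> : s = drop (size y1) (y1 ++ s) by rewrite drop_size_cat.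
  by rewrite e; case: (qs) => [|q l] //=; rewrite map_drop.
exists (drop (size y1).+1 w); split; first exact: desc_drop_wm.
split; first by rewrite !size_drop hsz.
move=> i; rewrite size_drop => hi.
rewrite drop_drop nth_drop addnC; apply: hn; by rewrite -ltn_subRL.
Qed.


Definition gstep (a : F) (pc : seq F * seq (seq F)) :=
  if isQ a then (a :: pc.1, pc.2) else ([::], (a :: pc.1) :: pc.2).
Definition gp (x : seq F) := foldr gstep ([::], [::]) x.

Lemma gp_inv x : x = (gp x).1 ++ flatten (gp x).2.
Proof.
elim: x => //= a x IH; rewrite /gstep; case: (isQ a) => /=; by rewrite -IH.
Qed.

Lemma gp_allQ_cat a d : all isQ a -> gp (a ++ d) = (a ++ (gp d).1, (gp d).2).
Proof.
elim: a => [|x a IH] /=; first by case: (gp d).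
by case/andP=> hx ha; rewrite IH // /gstep hx.
Qed.

Lemma gp_cat a d : (gp d).1 = [::] -> gp (a ++ d) = ((gp a).1, (gp a).2 ++ (gp d).2).
Proof.
move=> hd; elim: a => [|x a IH] /=; first by case: (gp d) hd => ? ? /= ->.
by rewrite IH /gstep; case: (isQ x).
Qed.

Lemma gp_nonQ b x : ~~ isQ b -> (gp (b :: x)).1 = [::].
Proof. by rewrite /= /gstep => /negbTE ->. Qed.

Definition goodp (y : seq F) := exists b r, [/\ y = b :: r, ~~ isQ b & all isQ r].

Lemma gp_pieces x0 ys : all isQ x0 -> (forall y, y \in ys -> goodp y) ->
  gp (x0 ++ flatten ys) = (x0, ys).
Proof.
move=> h0 hys; rewrite gp_allQ_cat //.
suff -> : gp (flatten ys) = ([::], ys) by rewrite cats0.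
elim: ys hys => //= y ys IH hys.
have [b [r [-> hb hr]]] := hys y (mem_head _ _).
rewrite cat_cons /= gp_allQ_cat // IH; last by move=> z hz; apply: hys; rewrite in_cons hz orbT.
by rewrite /gstep /= (negbTE hb) cats0.
Qed.

Lemma parse_mid x0 ys P B C : all isQ x0 -> (forall y, y \in ys -> goodp y) ->
  x0 ++ flatten ys = P ++ B ++ C ->
  (exists b B', B = b :: B' /\ ~~ isQ b) ->
  (C = [::] \/ exists c C', C = c :: C' /\ ~~ isQ c) ->
  exists ps, flatten ps = B /\ (forall p, p \in ps -> p \in ys).
Proof.
move=> h0 hys e [b [B' [eB hb]]] hC.
have gC : (gp C).1 = [::] by case: hC => [->|[c [C' [-> hc]]]] //; exact: gp_nonQ.
have gB : (gp B).1 = [::] by rewrite eB; exact: gp_nonQ.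
have gBC : (gp (B ++ C)).1 = [::] by rewrite gp_cat.
have := gp_pieces h0 hys; rewrite e gp_cat // gp_cat // => [[_ eys]].
exists (gp B).2; split; first by rewrite {2}(gp_inv B) gB.
by move=> p hp; rewrite -eys !mem_cat hp orbT.
Qed.

Lemma Qprefix x0 ys a d : all isQ x0 -> (forall y, y \in ys -> goodp y) ->
  x0 ++ flatten ys = a ++ d -> all isQ a -> exists rest, x0 = a ++ rest.
Proof.
move=> h0 hys e ha; have := gp_pieces h0 hys; rewrite e gp_allQ_cat // => [[<- _]].
by exists (gp d).1.
Qed.

Lemma nonQs_allQ x : all isQ x -> nonQs x = [::].
Proof. by elim: x => //= a x IH /andP[-> /IH]. Qed.


Definition GP (y : seq F) := (exists a, y = [:: FC a]) \/ S1 A rG rQ y.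
Definition FP (X : seq F) := exists ps, X = flatten ps /\ forall p, p \in ps -> GP p.
Definition FPre (X : seq F) := exists s0 ps,
  [/\ S0 A rG rQ s0, X = map FQ s0 ++ flatten ps & forall p, p \in ps -> GP p].

Lemma FP_cat a b : FP a -> FP b -> FP (a ++ b).
Proof.
case=> [pa [-> ha]] [pb [-> hb]]; exists (pa ++ pb); rewrite flatten_cat; split=> // p.
by rewrite mem_cat => /orP[/ha|/hb].
Qed.

Lemma FP_nil : FP [::].
Proof. by exists [::]. Qed.

Lemma FPre_cat a b : FPre a -> FP b -> FPre (a ++ b).
Proof.
case=> [s0 [pa [h0 -> ha]]] [pb [-> hb]]; exists s0, (pa ++ pb); rewrite flatten_cat catA; split=> // p.
by rewrite mem_cat => /orP[/ha|/hb].
Qed.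

Lemma FPre_Flat x : FPre x -> Flat A rG rQ x.
Proof.
by case=> s0 [ps [h0 -> hp]]; exists s0, ps; split.
Qed.

Lemma Flat_AllFlat x : Flat A rG rQ x -> AllFlat x.
Proof.
case=> x0 [ys [_ hys ->]]; exists x0.
suff [ss ->] : exists ss, flatten ys = flatten (map (@segw Ac Q) ss) by exists ss.
elim: ys hys => [|y ys IH] hys; first by exists [::].
have [ss ess] : exists ss, flatten ys = flatten (map (@segw Ac Q) ss).
  by apply: IH => z hz; apply: hys; rewrite in_cons hz orbT.
case: (hys y (mem_head _ _)) => [[a ->]|[w [qs [_ _ _ ->]]]].
  by exists (SCall a :: ss); rewrite /= ess.
by exists (STau (phi A w) (behead qs) :: ss); rewrite /= ess.
Qed.

Variable (R : {ffun Q -> Q} -> seq F -> Prop).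
Hypothesis hR : forall t, bounded_overapprox (K t) (R t).

Definition OP (y : seq F) := (exists a, y = [:: FC a]) \/ R1 R y.

Lemma OP_good y : OP y -> goodp y.
Proof.
case=> [[a ->]|[t [r [hr ->]]]]; first by exists (FC a), [::].
by exists (FT t), r; split=> //; exact: R_allQ (hR t) hr.
Qed.

Lemma RegFlat_parse x : RegFlat R x -> exists x0 ys,
  [/\ R0 R x0, all isQ x0, (forall y, y \in ys -> OP y /\ goodp y) & x = x0 ++ flatten ys].
Proof.
case=> x0 [ys [h0 hys ->]]; exists x0, ys; split=> //.
- case: h0 => t [pre hpre]; have := R_allQ (hR t) hpre; by rewrite all_cat => /andP[].
- by move=> y /hys hy; split=> //; exact: OP_good.
Qed.

Lemma nonQs_FT t r : all isQ r -> nonQs (FT t :: r) = [:: FT t].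
Proof. by move=> h; rewrite (nonQs_cat [:: FT t] r) (nonQs_allQ h) cats0. Qed.

Lemma L_piece p : OP p -> exists p', [/\ GP p', SE p p' & size p' = size p].
Proof.
case=> [[a ->]|[t [r [hr ->]]]]; first by exists [:: FC a]; split=> //; left; exists a.
have [_ _ _ hL _] := hR t.
have [y [hy ey]] : exists y, K t y /\ size y = size r by apply/hL; exists r.
exists (FT t :: y); split=> /=; [by right | | by rewrite ey].
have hyQ := K_allQ hy; have hrQ := R_allQ (hR t) hr.
by split=> //; rewrite !nonQs_FT.
Qed.

Lemma L_pieces ps : (forall p, p \in ps -> OP p) -> exists ps',
  [/\ forall p, p \in ps' -> GP p, SE (flatten ps) (flatten ps') & size (flatten ps') = size (flatten ps)].
Proof.
elim: ps => [|p ps IH] hps; first by exists [::].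
have [ps' [h1 h2 h3]] := IH (fun z hz => hps z (@mem_behead _ (p :: ps) _ hz)).
have [p' [k1 k2 k3]] := L_piece (hps p (mem_head _ _)).
exists (p' :: ps'); split=> /=.
- by move=> z; rewrite in_cons => /orP[/eqP->|/h1].
- exact: SE_cat.
- by rewrite !size_cat k3 h3.
Qed.

Lemma L_FP ps : (forall p, p \in ps -> OP p) -> exists X',
  [/\ FP X', SE (flatten ps) X' & size X' = size (flatten ps)].
Proof. by case/L_pieces=> ps' [h1 h2 h3]; exists (flatten ps'); split=> //; exists ps'. Qed.

Lemma split_pieces (ps : seq (seq F)) P S : (forall p, p \in ps -> p != [::]) ->
  flatten ps = P ++ S ->
  exists ps1 ps2, (ps = ps1 ++ ps2 /\ P = flatten ps1 /\ S = flatten ps2) \/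
   exists p1 p2, [/\ ps = ps1 ++ (p1 ++ p2) :: ps2, p1 != [::], p2 != [::],
                     P = flatten ps1 ++ p1 & S = p2 ++ flatten ps2].
Proof.
elim: ps P => [|p ps IH] P hne /=.
  case: P => [|//] /= eS; exists [::], [::]; by left.
move=> e; case: (leqP (size p) (size P)) => hs.
  have [P' [eP e']] := (cat_split e).1 hs.
  have [ps1 [ps2 [[k1 [k2 k3]]|[p1 [p2 [k1 h1 h2 k2 k3]]]]]] :=
    IH _ (fun z hz => hne z (@mem_behead _ (p :: ps) _ hz)) e'.
    by exists (p :: ps1), ps2; left; rewrite eP k1 k2 k3.
  by exists (p :: ps1), ps2; right; exists p1, p2; split=> //; rewrite ?k1 // eP k2 /= catA.
case: (eqVneq P [::]) => [eP|hP].
  by exists [::], (p :: ps); left; split=> //; split; [rewrite eP | rewrite /= e eP].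
have [p2 [ep eS]] := (cat_split e).2 hs.
exists [::], ps; right; exists P, p2; split=> //; first by rewrite -ep.
by apply/eqP=> e2; move: hs; rewrite ep e2 cats0 ltnn.
Qed.


Lemma FP_FPre x : FP x -> FPre x.
Proof. by case=> ps [-> hp]; exists [::], ps; split=> //; exact: S0_nil. Qed.

Lemma hd1_cons (q : F) a b : hd1 (q :: a) = hd1 (q :: b).
Proof. by case: q => [?|[?|?]]. Qed.

Lemma mk_prefix ps P S : (forall p, p \in ps -> OP p) -> flatten ps = P ++ S ->
  exists X' S', [/\ exists pre, X' = pre ++ S', FP X', FPre S', SE (P ++ S) X'
                   & SE S S' /\ size S' = size S].
Proof.
move=> hps e.
have hne : forall p, p \in ps -> p != [::].
  by move=> p /hps /OP_good [b [r [-> _ _]]].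
have [ps1 [ps2 [[k1 [k2 k3]]|[p1 [p2 [k1 h1 h2 k2 k3]]]]]] := split_pieces hne e.
  have [X1 [f1 s1 z1]] : exists X', [/\ FP X', SE (flatten ps1) X' & size X' = size (flatten ps1)].
    by apply: L_FP => p hp; apply: hps; rewrite k1 mem_cat hp.
  have [X2 [f2 s2 z2]] : exists X', [/\ FP X', SE (flatten ps2) X' & size X' = size (flatten ps2)].
    by apply: L_FP => p hp; apply: hps; rewrite k1 mem_cat hp orbT.
  exists (X1 ++ X2), X2; split.
  - by exists X1.
  - exact: FP_cat.
  - exact: FP_FPre.
  - by rewrite k2 k3; exact: SE_cat.
  - by rewrite k3.
have [X1 [f1 s1 z1]] : exists X', [/\ FP X', SE (flatten ps1) X' & size X' = size (flatten ps1)].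
  by apply: L_FP => p hp; apply: hps; rewrite k1 mem_cat hp.
have [X2 [f2 s2 z2]] : exists X', [/\ FP X', SE (flatten ps2) X' & size X' = size (flatten ps2)].
  by apply: L_FP => p hp; apply: hps; rewrite k1 mem_cat in_cons hp !orbT.
have : OP (p1 ++ p2) by apply: hps; rewrite k1 mem_cat mem_head orbT.
case=> [[a ea]|[t [r [hr er]]]].
  by case: p1 ea h1 {k1 k2} => [|x [|y p1]] //= [_ e2]; rewrite e2 in h2.
case: p1 er h1 k1 k2 => [//|b p1'] /= [eb er] _ k1 k2.
case: p2 er h2 k1 k3 => [//|q p2'] er _ k1 k3.
have hrQ := R_allQ (hR t) hr.
have [_ _ _ _ hP] := hR t.
have [y [hy /(inPsiP (q, _) y) [y1 [y2 [ey esz]]]]] :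
    exists x, K t x /\ inPsi (q, size (q :: p2')) x.
  apply/hP; exists r; split=> //; apply/(inPsiP (q, _) r); by exists p1', p2'.
have hK : K t (y1 ++ q :: y2) by rewrite -ey.
have [s0 [es hs0]] := S0_suffix hK.
have hyQ := K_allQ hy.
have hsQ : all isQ (q :: y2) by move: hyQ; rewrite ey all_cat => /andP[].
have hpQ : all isQ (q :: p2') by move: hrQ; rewrite -er all_cat => /andP[].
exists (X1 ++ (FT t :: y1) ++ (q :: y2) ++ X2), ((q :: y2) ++ X2); split.
- by exists (X1 ++ FT t :: y1); rewrite !catA.
- apply: FP_cat => //; rewrite catA; apply: FP_cat => //.
  exists [:: FT t :: y1 ++ q :: y2]; split; first by rewrite /= cats0.
  by move=> p; rewrite inE => /eqP ->; right; rewrite -ey.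
- by apply: FPre_cat => //; exists s0, [::]; split=> //; rewrite es cats0.
- rewrite k2 k3 -catA; apply: SE_cat => //; rewrite !catA !cat_cons er -ey eb -!cat_cons.
  apply: SE_cat => //; split=> //; rewrite !nonQs_FT //.
- split; last by move: esz => /= [ez]; rewrite k3 !size_cat z2 /= ez.
  rewrite k3; apply: SE_cat => //; split; [by rewrite !nonQs_allQ | exact: hd1_cons | by []].
Qed.


Lemma catl_cancel (T : Type) (a b c : seq T) : a ++ b = a ++ c -> b = c.
Proof. by elim: a => //= x a IH [/IH]. Qed.

Lemma flatten_nseqS (T : Type) (u : seq T) n : flatten (nseq n.+1 u) = flatten (nseq n u) ++ u.
Proof.
elim: n => [|n IH]; first by rewrite /= cats0.
by change (u ++ flatten (nseq n.+1 u) = flatten (nseq n.+1 u) ++ u); rewrite {1}IH catA.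
Qed.

Lemma suffix_eq (T : Type) (a b x y : seq T) : a ++ x = b ++ y -> size x = size y -> x = y.
Proof.
move=> e hs; have hab : size a = size b.
  by have := congr1 size e; rewrite !size_cat hs => /eqP; rewrite eqn_add2r => /eqP.
by have := congr1 (drop (size a)) e; rewrite drop_size_cat // hab drop_size_cat.
Qed.

Lemma size_blocks (T : Type) (X Y : seq T) bs : size X = size Y ->
  size (blocks X Y bs) = size bs * size X.
Proof.
move=> h; elim: bs => //= b bs IH; rewrite /blocks /= size_cat -/(blocks X Y bs) IH mulSn.
by case: b; rewrite ?h.
Qed.

Lemma blocks_cons (T : Type) (X Y : seq T) b bs :
  blocks X Y (b :: bs) = (if b then X else Y) ++ blocks X Y bs.
Proof. by []. Qed.

Lemma blocks_cat (T : Type) (X Y : seq T) bs1 bs2 :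
  blocks X Y (bs1 ++ bs2) = blocks X Y bs1 ++ blocks X Y bs2.
Proof. by rewrite /blocks map_cat flatten_cat. Qed.

Lemma blocks_inj (T : eqType) (X Y : seq T) : X != Y -> size X = size Y ->
  forall bs1 bs2, size bs1 = size bs2 -> blocks X Y bs1 = blocks X Y bs2 -> bs1 = bs2.
Proof.
move=> hXY hs; elim=> [|b1 bs1 IH] [|b2 bs2] //= [hb]; rewrite !blocks_cons => e.
have e1 : (if b1 then X else Y) = (if b2 then X else Y).
  have := congr1 (take (size X)) e; rewrite !take_size_cat //; by case: (b1); case: (b2).
rewrite e1 in e; have := IH _ hb (catl_cancel e); move=> ->.
by case: b1 b2 e1 {e} => [] [] // e1; rewrite e1 eqxx in hXY.
Qed.

Lemma blocks_expandQ (T : Type) (u v : seq T) (bs : seq bool) :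
  blocks u v (flatten (map (fun b : bool => if b then nseq (size v) true else nseq (size u) false) bs))
  = blocks (flatten (nseq (size v) u)) (flatten (nseq (size u) v)) bs.
Proof.
elim: bs => //= b bs IH; rewrite blocks_cat IH blocks_cons; congr (_ ++ _).
case: b; [elim: (size v) | elim: (size u)] => //= n IHn; by rewrite blocks_cons IHn.
Qed.

Lemma pureQ_false u2 v2 u v (Z : seq F -> Prop) (zs : nat -> seq F) :
  injective rG -> injective rQ ->
  (exists p, u = p ++ u2) -> (exists p, v = p ++ v2) -> size u2 = size v2 ->
  (forall n, Z (zs n)) ->
  (forall n bs, size bs <= n -> exists c1 c2,
      [/\ nu_f A rG rQ (u2 ++ blocks u v bs ++ zs n) c1,
          nu_f A rG rQ (v2 ++ blocks u v bs ++ zs n) c2 & c1 <> c2]) ->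
  (forall x, fool_set u2 v2 u v Z x -> RegFlat R x) ->
  all isQ (u ++ v) -> False.
Proof.
move=> iG iQ [pu hu] [pv hv] hsz hZ hfool hsub hQ.
case: (eqVneq u2 v2) => [e|hne].
  have [c1 [c2 [h1 h2 hc]]] := hfool 0 [::] (leqnn 0).
  by apply: hc; rewrite e in h1; exact: nu_f_fun iG iQ h1 h2.
have hsu : size u2 <= size u by rewrite hu size_cat leq_addl.
have hsv : size v2 <= size v by rewrite hv size_cat leq_addl.
have hu20 : 0 < size u2.
  rewrite lt0n; apply/negP=> /eqP e0; move: hne.
  by rewrite (size0nil e0) (size0nil (etrans (esym hsz) e0)) eqxx.
have hu0 : 0 < size u by apply: leq_trans hsu.
have hv0 : 0 < size v by rewrite -hsz in hsv; apply: leq_trans hsv.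
set X := flatten (nseq (size v) u); set Y := flatten (nseq (size u) v).
have hsX : size X = size Y.
  by rewrite /X /Y !size_flatten /shape !map_nseq !sumn_nseq mulnC.
have hXY : X != Y.
  apply/eqP=> eXY; move/eqP: hne; apply.
  have eX : X = (flatten (nseq (size v).-1 u) ++ pu) ++ u2.
    by rewrite /X -(prednK hv0) flatten_nseqS -catA -hu.
  have eY : Y = (flatten (nseq (size u).-1 v) ++ pv) ++ v2.
    by rewrite /Y -(prednK hu0) flatten_nseqS -catA -hv.
  apply: (suffix_eq (a := flatten (nseq (size v).-1 u) ++ pu) (b := flatten (nseq (size u).-1 v) ++ pv)) hsz.
  by rewrite -eX -eY.
have hQu2 : all isQ u2 by move: hQ; rewrite all_cat hu all_cat => /andP[/andP[]].
have hQX : all isQ X.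
  move: hQ; rewrite all_cat => /andP[hQu _]; rewrite /X; elim: (size v) => //= n IHn.
  by rewrite all_cat hQu.
have hQY : all isQ Y.
  move: hQ; rewrite all_cat => /andP[_ hQv]; rewrite /Y; elim: (size u) => //= n IHn.
  by rewrite all_cat hQv.
have [ws hws] : exists ws, forall t, t \in enum {: {ffun Q -> Q}} ->
    forall x, (exists pre rest, R t (pre ++ x ++ rest)) -> BW ws x.
  apply: BW_union => t.
  have [[ws0 hws0] _ _ _ _] := hR t.
  have [ws1 h1] := BW_fac ws0.
  by exists ws1 => x [pre [rest /hws0 hb]]; exact: h1 hb.
have key : forall M (b : M.-tuple bool), BW ws (u2 ++ blocks X Y b).
  move=> M b.
  set bs' := flatten (map (fun b : bool => if b then nseq (size v) true else nseq (size u) false) b).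
  have hx : fool_set u2 v2 u v Z (u2 ++ blocks u v bs' ++ zs 0).
    by exists u2, bs', (zs 0); split=> //; left.
  have [x0 [ys [h0 hx0 hys ex]]] := RegFlat_parse (hsub _ hx).
  have hys' : forall y, y \in ys -> goodp y by move=> y /hys [].
  have hallQ : all isQ (u2 ++ blocks u v bs').
    rewrite all_cat hQu2 /bs' blocks_expandQ /=; elim: (tval b) => //= c l IH.
    by rewrite blocks_cons all_cat IH andbT; case: c; [exact: hQX | exact: hQY].
  have [rest erest] := Qprefix hx0 hys' (etrans (esym ex) (catA _ _ _)) hallQ.
  case: h0 => t [pre hpre].
  have := hws t (mem_enum _ _) (u2 ++ blocks u v bs'); rewrite /bs' blocks_expandQ; apply.
  by exists pre, rest; rewrite -blocks_expandQ -/bs' -erest.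
set L := size X.
have hG : forall M, injective (fun b : M.-tuple bool => u2 ++ blocks X Y b).
  move=> M b1 b2 /catl_cancel e; apply: val_inj.
  by apply: (blocks_inj hXY hsX) => //; rewrite !size_tuple.
have [M hM] := exp_beats_poly (size u2) L (size ws).
have hN : forall b : M.-tuple bool, BW ws (u2 ++ blocks X Y b) /\ size (u2 ++ blocks X Y b) = size u2 + L * M.
  by move=> b; split; [exact: key | rewrite size_cat size_blocks // size_tuple mulnC].
have := BW_count (hG M) hN.
by rewrite leqNgt hM.
Qed.


Lemma split_first_nonQ c : has (predC isQ) c ->
  exists c1 a0 c2', [/\ c = c1 ++ a0 :: c2', all isQ c1 & ~~ isQ a0].
Proof.
elim: c => [//|a c IH] /= /orP[ha|/IH [c1 [a0 [c2' [-> h1 h2]]]]].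
  by exists [::], a, c.
case: (boolP (isQ a)) => hq; first by exists (a :: c1), a0, c2'; split=> //=; rewrite hq.
by exists [::], a, (c1 ++ a0 :: c2').
Qed.

Definition expand (cb : bool) (bs : seq bool) := cb :: flatten (map (fun b => [:: b; cb]) bs).

Lemma size_expand cb bs : size (expand cb bs) = (size bs).*2.+1.
Proof. by elim: bs => //= b bs IH; rewrite /expand /= in IH *; rewrite IH doubleS. Qed.

Lemma blocks_expand (u v c1 c2 : seq F) cb bs :
  (if cb then u else v) = c1 ++ c2 ->
  blocks u v (expand cb bs) =
  c1 ++ flatten (map (fun b : bool => c2 ++ (if b then u else v) ++ c1) bs) ++ c2.
Proof.
move=> ec; elim: bs => [|b bs IH]; first by rewrite /expand /= /blocks /= cats0 ec.
rewrite /expand /= in IH *.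
rewrite (blocks_cons u v cb) (blocks_cons u v b) IH ec /= -!catA.
by case: b.
Qed.

Lemma mixed_case u2 v2 u v (Z : seq F -> Prop) (zs : nat -> seq F) K0 N0 :
  (exists p, u = p ++ u2) -> (exists p, v = p ++ v2) -> size u2 = size v2 ->
  (forall x, fool_set u2 v2 u v Z x -> exists c, nu_f A rG rQ x c) ->
  (forall n, Z (zs n)) -> (forall n, N0 <= n -> size (zs n) <= K0 * n) ->
  (forall n bs, size bs <= n -> exists c1 c2,
      [/\ nu_f A rG rQ (u2 ++ blocks u v bs ++ zs n) c1,
          nu_f A rG rQ (v2 ++ blocks u v bs ++ zs n) c2 & c1 <> c2]) ->
  (forall x, fool_set u2 v2 u v Z x -> RegFlat R x) ->
  has (predC isQ) (u ++ v) -> contains_lfs (Flat A rG rQ) (nu_f A rG rQ).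
Proof.
move=> [pu hu] [pv hv] hsz hdom hZ hlin hfool hsub hhas.
have [cb hc] : exists cb : bool, has (predC isQ) (if cb then u else v).
  by move: hhas; rewrite has_cat => /orP[h|h]; [exists true | exists false].
have [c1 [a0 [c2' [ec hc1 ha0]]]] := split_first_nonQ hc.
set c2 := a0 :: c2'.
set Bx := fun x : bool => c2 ++ (if x then u else v) ++ c1.
have parse : forall y bs z P B C, fool_set u2 v2 u v Z (y ++ blocks u v bs ++ z) ->
    y ++ blocks u v bs ++ z = P ++ B ++ C ->
    (exists b B', B = b :: B' /\ ~~ isQ b) ->
    (C = [::] \/ exists c C', C = c :: C' /\ ~~ isQ c) ->
    exists ps, flatten ps = B /\ (forall p, p \in ps -> OP p).
  move=> y bs z P B C hf e hB hC.
  have [x0 [ys [_ hx0 hys ex]]] := RegFlat_parse (hsub _ hf).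
  have hys' : forall y, y \in ys -> goodp y by move=> y' /hys [].
  have [ps [h1 h2]] := parse_mid hx0 hys' (etrans (esym ex) e) hB hC.
  by exists ps; split=> // p /h2 /hys [].
have hpx : forall x, exists ps, flatten ps = Bx x /\ (forall p, p \in ps -> OP p).
  move=> x; apply: (parse u2 [:: cb; x; cb] (zs 0) (u2 ++ c1) (Bx x) (c2 ++ zs 0)).
  - by exists u2, [:: cb; x; cb], (zs 0); split=> //; left.
  - by rewrite /Bx !blocks_cons /blocks /= ec !cats0 -!catA.
  - by exists a0, (c2' ++ (if x then u else v) ++ c1).
  - by right; exists a0, (c2' ++ zs 0).
have hpz : forall n, exists ps, flatten ps = c2 ++ zs n /\ (forall p, p \in ps -> OP p).
  move=> n; apply: (parse u2 [:: cb] (zs n) (u2 ++ c1) (c2 ++ zs n) [::]).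
  - by exists u2, [:: cb], (zs n); split=> //; left.
  - by rewrite /blocks /= ec !cats0 -!catA.
  - by exists a0, (c2' ++ zs n).
  - by left.
have [psu [epu hpsu]] := hpx true.
have [psv [epv hpsv]] := hpx false.
have eBu : Bx true = (c2 ++ pu) ++ (u2 ++ c1) by rewrite /Bx /= hu -!catA.
have eBv : Bx false = (c2 ++ pv) ++ (v2 ++ c1) by rewrite /Bx /= hv -!catA.
have [Xu [Su [[preu eXu] fXu fSu sXu [sSu zSu]]]] := mk_prefix hpsu (etrans epu eBu).
have [Xv [Sv [[prev eXv] fXv fSv sXv [sSv zSv]]]] := mk_prefix hpsv (etrans epv eBv).
rewrite -eBu in sXu; rewrite -eBv in sXv.
have hzex : forall n, exists z', [/\ FP z', SE (c2 ++ zs n) z' & size z' = size (c2 ++ zs n)].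
  by move=> n; have [ps [e hps]] := hpz n; rewrite -e; exact: L_FP.
pose zf := fun n => proj1_sig (constructive_indefinite_description _ (hzex n)).
have hzf : forall n, [/\ FP (zf n), SE (c2 ++ zs n) (zf n) & size (zf n) = size (c2 ++ zs n)].
  by move=> n; rewrite /zf; case: constructive_indefinite_description.
pose zs' := fun n => zf (n.*2.+1).
pose Z' := fun z => exists n, z = zs' n.
set un := Xu; set vn := Xv.
have hblk : forall bs, FP (blocks un vn bs) /\
    SE (flatten (map (fun b : bool => c2 ++ (if b then u else v) ++ c1) bs)) (blocks un vn bs).
  elim=> [|b bs [IH1 IH2]]; first by split; [exact: FP_nil | exact: SE_refl].
  rewrite blocks_cons; split; first by apply: FP_cat => //; case: b.
  have -> : flatten (map (fun b : bool => c2 ++ (if b then u else v) ++ c1) (b :: bs)) =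
    (c2 ++ (if b then u else v) ++ c1) ++
    flatten (map (fun b : bool => c2 ++ (if b then u else v) ++ c1) bs) by [].
  by apply: SE_cat => //; case: b.
have hword : forall (yo y : seq F) bs n, FPre y -> SE (yo ++ c1) y ->
    Flat A rG rQ (y ++ blocks un vn bs ++ zs' n) /\
    SE (yo ++ blocks u v (expand cb bs) ++ zs n.*2.+1) (y ++ blocks un vn bs ++ zs' n).
  move=> yo y bs n fy sy; have [b1 b2] := hblk bs; have [f3 s3 _] := hzf n.*2.+1.
  split; first by apply: FPre_Flat; apply: FPre_cat => //; exact: FP_cat.
  rewrite (blocks_expand bs ec) !catA -[X in SE X _]catA.
  by apply: SE_cat; [apply: SE_cat | exact: s3].
have hold : forall bs n, fool_set u2 v2 u v Z (u2 ++ blocks u v (expand cb bs) ++ zs n.*2.+1) /\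
                        fool_set u2 v2 u v Z (v2 ++ blocks u v (expand cb bs) ++ zs n.*2.+1).
  move=> bs n; split.
    by exists u2, (expand cb bs), (zs n.*2.+1); split=> //; left.
  by exists v2, (expand cb bs), (zs n.*2.+1); split=> //; right.
exists Su, Sv, un, vn, Z'; split; last first.
  move=> x [y [bs [z [hy [[n ez] ->]]]]]; rewrite ez; case: hy => ->.
    exact: (hword u2 Su bs n fSu sSu).1.
  exact: (hword v2 Sv bs n fSv sSv).1.
split.
- by exists preu.
- by exists prev.
- by rewrite zSu zSv !size_cat hsz.
- move=> x [y [bs [z [hy [[n ez] ->]]]]]; rewrite ez; case: hy => ->.
    have [fl se] := hword u2 Su bs n fSu sSu.
    have [c hc'] := hdom _ (hold bs n).1.
    by exists c; apply: nu_f_transfer hc' (Flat_AllFlat fl) se.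
  have [fl se] := hword v2 Sv bs n fSv sSv.
  have [c hc'] := hdom _ (hold bs n).2.
  by exists c; apply: nu_f_transfer hc' (Flat_AllFlat fl) se.
exists zs'; split.
- by move=> n; exists n.
- exists (size c2 + 3 * K0), N0.+1 => n hn.
  have [_ _ ->] := hzf n.*2.+1.
  have h1 := hlin n.*2.+1 (leq_trans (ltnW hn) (leq_trans (leq_addr n n) _)).
  rewrite -addnn in h1 *; rewrite size_cat.
  have h2 : size (zs (n + n).+1) <= K0 * (n + n).+1.
    by apply: hlin; apply: leq_trans (ltnW hn) _; lia.
  nia.
- move=> n bs hbs.
  have hbs' : size (expand cb bs) <= n.*2.+1 by rewrite size_expand ltnS leq_double.
  have [c1' [c2'' [h1 h2 hne]]] := hfool _ _ hbs'.
  exists c1', c2''; split=> //.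
    have [fl se] := hword u2 Su bs n fSu sSu.
    by apply: nu_f_transfer h1 (Flat_AllFlat fl) se.
  have [fl se] := hword v2 Sv bs n fSv sSv.
  by apply: nu_f_transfer h2 (Flat_AllFlat fl) se.
Qed.

End Part1.

Theorem proposition14 (Ac Ar Ai Q G : finType) (A : vpa Ac Ar Ai Q G)
    (rG : G -> nat) (rQ : Q -> nat) :
  injective rG -> injective rQ ->
  0 < #|Ac| -> 0 < #|Ar| ->
  (exists w, acc A (init A) w) -> (exists w, ~~ acc A (init A) w) ->
  bounded (S0 A rG rQ) ->
  forall R : {ffun Q -> Q} -> seq (flat Ac Q) -> Prop,
    (forall t, bounded_overapprox (tauinvS1 A rG rQ t) (R t)) ->
    contains_lfs (RegFlat R) (nu_f A rG rQ) ->
    contains_lfs (Flat A rG rQ) (nu_f A rG rQ).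
Proof.
move=> iG iQ _ _ _ _ _ R hR [u2 [v2 [u [v [Z [[hu hv hsz hdom [zs [hZ [K0 [N0 hlin]] hfool]]] hsub]]]]]].
case: (boolP (has (predC (@isQ Ac Q)) (u ++ v))) => hh.
  exact: (mixed_case hR hu hv hsz hdom hZ hlin hfool hsub hh).
exfalso; apply: (pureQ_false hR iG iQ hu hv hsz hZ hfool hsub).
by move: hh; rewrite has_predC negbK.
Qed.
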